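(* The unary language $\mathtt{UGAUSS}=\{a^{n^2+n}\mid n\in\mathbb{N}\}$ is recognized by some real-time deterministic vector automaton of dimension $2$ ($\mathrm{rtDVA}(2)$).
   Context: Here $\mathbb{N}=\{0,1,2,\dots\}$. A real-time deterministic vector automaton of dimension $k$ ($\mathrm{rtDVA}(k)$) is a 6-tuple $\mathcal{V}=(Q,\Sigma,\delta,q_0,Q_a,v)$ where $Q$ is a finite set of states, $q_0\in Q$ the initial state, $Q_a\subseteq Q$ the accept states, $\Sigma$ the input alphabet, $v\in\mathbb{Q}^k$ an initial row vector (freely chosen), and $\delta:Q\times(\Sigma\cup\{\cent,\$\})\times\{=,\neq\}\to Q\times S$, with $S$ the set of $k\times k$ rational matrices. On input $w$ the machine reads $\cent w\$$ left to right, one symbol per step, starting in $q_0$ with vector $v$; in state $q$ reading $\sigma$, with $\omega$ equal to ''$=$'' iff the first vector entry equals $1$, if $\delta(q,\sigma,\omega)=(q',M)$ it moves to $q'$ and multiplies the row vector on the right by $M$. The input is accepted iff after processing $\$$ the state is in $Q_a$ and the first vector entry equals $1$. *)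

(* Defs.v *)
From HB Require Import structures.
From mathcomp Require Import all_boot all_order all_algebra.
Set Implicit Arguments. Unset Strict Implicit. Unset Printing Implicit Defensive.
Import Order.TTheory GRing.Theory Num.Theory.
Local Open Scope ring_scope.

Inductive tape_sym (Sigma : Type) : Type :=
  | Sym of Sigma
  | Cent
  | Dollar.
Arguments Cent {Sigma}.
Arguments Dollar {Sigma}.

(* An rtDVA(k): finite state set Q, input alphabet Sigma, dimension k.
   The boolean argument of delta is true iff omega is "=" (first entry equals 1). *)
Record rtDVA (Q : finType) (Sigma : Type) (k : nat) := RtDVA {
  dva_delta : Q -> tape_sym Sigma -> bool -> Q * 'M[rat]_k;
  dva_q0 : Q;
  dva_acc : {set Q};
  dva_v : 'rV[rat]_k
}.

(* First entry of a row vector (index 0); a vector of dimension 0 has none,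
   we use the value 0 in that degenerate case. *)
Definition first_entry (k : nat) (v : 'rV[rat]_k) : rat :=
  \sum_(j < k | val j == 0%N) v 0 j.

Definition dva_step (Q : finType) (Sigma : Type) (k : nat) (V : rtDVA Q Sigma k)
    (c : Q * 'rV[rat]_k) (s : tape_sym Sigma) : Q * 'rV[rat]_k :=
  let: (q, v) := c in
  let: (q', M) := dva_delta V q s (first_entry v == 1) in
  (q', v *m M).

Definition dva_run (Q : finType) (Sigma : Type) (k : nat) (V : rtDVA Q Sigma k)
    (w : seq Sigma) : Q * 'rV[rat]_k :=
  foldl (dva_step V) (dva_q0 V, dva_v V) (Cent :: rcons (map (@Sym Sigma) w) Dollar).

Definition dva_accepts (Q : finType) (Sigma : Type) (k : nat) (V : rtDVA Q Sigma k)
    (w : seq Sigma) : Prop :=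
  let: (q, v) := dva_run V w in (q \in dva_acc V) /\ first_entry v = 1.

Definition dva_recognizes (Q : finType) (Sigma : Type) (k : nat) (V : rtDVA Q Sigma k)
    (L : seq Sigma -> Prop) : Prop :=
  forall w, dva_accepts V w <-> L w.

(* The unary alphabet {a} is modelled by unit (a = tt). *)
Definition UGAUSS (w : seq unit) : Prop :=
  exists n : nat, w = nseq (n ^ 2 + n)%N tt.

(* Main.v *)
Require Import Defs.
From mathcomp Require Import all_boot all_order all_algebra.
From mathcomp Require Import zify ring lra.
Set Implicit Arguments. Unset Strict Implicit. Unset Printing Implicit Defensive.
Import Order.TTheory GRing.Theory Num.Theory.
Local Open Scope ring_scope.

Definition vec (x y : rat) : 'rV[rat]_2 := \row_(j < 2) (if val j == 0%N then x else y).
Definition Md : 'M[rat]_2 := \matrix_(i < 2, j < 2)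
  (if val i == 0%N then (if val j == 0%N then 2 else 0) else (if val j == 0%N then 0 else 1)).
Definition Mr : 'M[rat]_2 := \matrix_(i < 2, j < 2)
  (if val i == 0%N then 0 else (if val j == 0%N then 1/2 else 1/4)).

Lemma vec_Md x y : vec x y *m Md = vec (2 * x) y.
Proof.
apply/rowP => j; rewrite !mxE big_ord_recl big_ord1 !mxE /=.
case: j => [[|[|j]] Hj] //=; ring.
Qed.

Lemma vec_Mr x y : vec x y *m Mr = vec (y / 2) (y / 4).
Proof.
apply/rowP => j; rewrite !mxE big_ord_recl big_ord1 !mxE /=.
case: j => [[|[|j]] Hj] //=; ring.
Qed.

Lemma fe_vec x y : first_entry (vec x y) = x.
Proof.
rewrite /first_entry big_mkcond big_ord_recl big_ord1 !mxE /=; ring.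
Qed.

Definition f (p : rat * rat) : rat * rat :=
  if p.1 == 1 then (p.2 / 2, p.2 / 4) else (2 * p.1, p.2).

Definition Vg : rtDVA unit unit 2 :=
  @RtDVA unit unit 2
    (fun q s b => match s with Sym _ => (tt, if b then Mr else Md) | _ => (tt, 1%:M) end)
    tt setT (vec 1 1).

Lemma run_nseq m p : foldl (dva_step Vg) (tt, vec p.1 p.2) (nseq m (Sym tt))
  = (tt, vec (iter m f p).1 (iter m f p).2).
Proof.
elim: m p => [|m IH] [x y] //=.
rewrite /dva_step /= fe_vec.
rewrite -/(iter m.+1 f (x, y)) iterSr.
case: eqP => Hx.
- rewrite vec_Mr /f /= Hx eqxx; exact: (IH (y/2, y/4)).
- rewrite vec_Md /f /=; case: eqP => // _; exact: (IH (2*x, y)).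
Qed.

Lemma pow2_eq r s : ((2:rat) ^+ r == 2 ^+ s) = (r == s).
Proof.
rewrite -!natrX eqr_nat; apply/eqP/eqP => [|->//]; exact: expnI.
Qed.

Lemma block k r : (r <= 2 * k + 1)%N ->
  iter r.+1 f (1, 1 / 4 ^+ k) = (2 ^+ r / 2 ^+ (2 * k + 1), 1 / 4 ^+ k.+1).
Proof.
elim: r => [|r IH] Hr.
- rewrite /= /f /= expr0.
  have -> : (4 : rat) = 2 ^+ 2 by rewrite expr2; ring.
  rewrite -!exprM addn1 mulnS !exprS expr0.
  have H2 : (2:rat) ^+ (2 * k) != 0 by rewrite expf_neq0.
  set t := (2:rat) ^+ (2 * k) in H2 *.
  congr pair; field; rewrite ?H2 //.
- rewrite iterS IH; last lia.
  rewrite /f /=.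
  have Hne : 2 ^+ r / 2 ^+ (2 * k + 1) != 1 :> rat.
    apply/negP => /eqP H.
    have : (2:rat) ^+ r == 2 ^+ (2 * k + 1).
      by apply/eqP; apply: divr1_eq.
    rewrite pow2_eq => /eqP; lia.
  by rewrite (negbTE Hne) [2 ^+ r.+1]exprS mulrA.
Qed.

Lemma tri k : iter (k * k.+1) f (1, 1) = (1, 1 / 4 ^+ k).
Proof.
elim: k => [|k IH]; first by rewrite /= expr0 divr1.
have -> : (k.+1 * k.+2 = (2 * k + 1).+1 + k * k.+1)%N by lia.
rewrite iterD IH block // /=.
rewrite divff // expf_neq0 //.
Qed.

Lemma sandwich m : exists k, (k * k.+1 <= m < k.+1 * k.+2)%N.
Proof.
elim: m => [|m [k Hk]]; first by exists 0%N.
case: (ltnP m.+1 (k.+1 * k.+2)) => H.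
- exists k; lia.
- exists k.+1; lia.
Qed.

Lemma key m : (iter m f (1, 1)).1 = 1 <-> exists n : nat, m = (n ^ 2 + n)%N.
Proof.
split.
- have [k Hk] := sandwich m.
  have -> : m = ((m - k * k.+1) + k * k.+1)%N by lia.
  rewrite iterD tri.
  case Es: (m - k * k.+1)%N => [|r].
  + move=> _; exists k; lia.
  + rewrite block /=; last lia.
    move=> H; exfalso.
    have : (2:rat) ^+ r == 2 ^+ (2 * k + 1).
      by apply/eqP; apply: divr1_eq.
    rewrite pow2_eq => /eqP; lia.
- move=> [n ->]. have -> : (n ^ 2 + n = n * n.+1)%N by lia.
  by rewrite tri.
Qed.

Lemma foldl_cons' (T R : Type) (g : R -> T -> R) z x s : foldl g z (x :: s) = foldl g (g z x) s.
Proof. by []. Qed.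

Theorem theorem2 :
  exists (Q : finType) (V : rtDVA Q unit 2), dva_recognizes V UGAUSS.
Proof.
exists unit, Vg => w.
have Ew : w = nseq (size w) tt.
  by elim: w => [|[] w IH] //=; rewrite -IH.
rewrite /dva_accepts /dva_run /UGAUSS.
rewrite Ew map_nseq foldl_cons' foldl_rcons.
have -> : dva_step Vg (dva_q0 Vg, dva_v Vg) Cent = (tt, vec ((1:rat),(1:rat)).1 ((1:rat),(1:rat)).2)
  by rewrite /dva_step /= mulmx1.
rewrite run_nseq /dva_step /= mulmx1 fe_vec in_setT key.
split; [by case=> _ [n ->]; exists n | move=> [n E]; split => //; exists n].
have : size (nseq (size w) tt) = size (nseq (n ^ 2 + n) tt) by rewrite E.
by rewrite !size_nseq.
Qed.
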